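(* Let $\mathbb{X},\mathbb{Y}$ be real Banach spaces of dimension greater than $1$, and let $\mathcal{F}$ be a family of norm one operators in $\mathbb{L}(\mathbb{X},\mathbb{Y})$. Then the pair $(\mathbb{X},\mathbb{Y})$ has uniform sBPBp with respect to $\mathcal{F}$ if and only if for every $\epsilon>0$, \[\sup\{\|Tz\|: T\in\mathcal{F},\ z\in D(T,\epsilon)\}<1,\qquad\text{where } D(T,\epsilon)=S_{\mathbb{X}}\setminus\bigcup_{x\in M_T}B(x,\epsilon).\]
   Context: $S_{\mathbb{X}}$ is the unit sphere, $B(x,r)$ the open ball of centre $x$ and radius $r$, and $M_T=\{x\in S_{\mathbb{X}}:\|Tx\|=\|T\|\}$. The pair $(\mathbb{X},\mathbb{Y})$ has uniform sBPBp with respect to $\mathcal{F}$ if for every $\epsilon>0$ there exists $\eta(\epsilon)>0$ such that whenever $T\in\mathcal{F}$ and $x_0\in S_{\mathbb{X}}$ satisfy $\|Tx_0\|>1-\eta(\epsilon)$, there exists $x_1\in S_{\mathbb{X}}$ with $\|Tx_1\|=1$ and $\|x_1-x_0\|<\epsilon$. *)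

(* Defs.v *)
From HB Require Import structures.
From mathcomp Require Import all_boot all_order all_algebra.
From mathcomp Require Import all_classical all_reals all_analysis.
Set Implicit Arguments. Unset Strict Implicit. Unset Printing Implicit Defensive.
Import Order.TTheory GRing.Theory Num.Theory.
Import numFieldNormedType.Exports.
Local Open Scope classical_set_scope.
Local Open Scope ring_scope.

Section Defs.
Context {R : realType} {X Y : normedModType R}.

Definition unit_sphere : set X := [set x | `|x| = 1].

Definition opnorm (T : {linear X -> Y}) : R :=
  sup [set `|T x| | x in unit_sphere].

Definition norm_attaining_set (T : {linear X -> Y}) : set X :=
  [set x | unit_sphere x /\ `|T x| = opnorm T].

Definition Dset (T : {linear X -> Y}) (eps : R) : set X :=
  unit_sphere `\` \bigcup_(x in norm_attaining_set T) ball x eps.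

Definition uniform_sBPBp (F : set {linear X -> Y}) : Prop :=
  forall eps : R, 0 < eps -> exists2 eta : R, 0 < eta &
    forall T x0, F T -> unit_sphere x0 -> `|T x0| > 1 - eta ->
      exists x1, [/\ unit_sphere x1, `|T x1| = 1 & `|x1 - x0| < eps].

End Defs.

Definition dim_gt1 {R : realType} (V : lmodType R) : Prop :=
  exists x y : V, forall a b : R, a *: x + b *: y = 0 -> a = 0 /\ b = 0.

(* Main.v *)
Require Import Defs.
From HB Require Import structures.
From mathcomp Require Import all_boot all_order all_algebra.
From mathcomp Require Import all_classical all_reals all_analysis.
From mathcomp Require Import lra.
Import Order.TTheory GRing.Theory Num.Theory.
Import numFieldNormedType.Exports.
Local Open Scope classical_set_scope.
Local Open Scope ring_scope.

Lemma opnorm1_le (R : realType) (X Y : normedModType R) (T : {linear X -> Y}) z :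
  opnorm T = 1 -> unit_sphere z -> `|T z| <= 1.
Proof.
move=> h1 hz.
set S := [set `|T x| | x in unit_sphere] in h1.
have hs : has_sup S.
  apply: contrapT => hn; move: h1; rewrite /opnorm -/S sup_out //.
  by move/eqP; rewrite eq_sym oner_eq0.
rewrite -h1; apply: sup_upper_bound => //; by exists z.
Qed.

Theorem theorem2p11 (R : realType) (X Y : completeNormedModType R)
    (F : set {linear X -> Y}) :
  dim_gt1 X -> dim_gt1 Y ->
  (forall T, F T -> continuous T /\ opnorm T = 1) ->
  (uniform_sBPBp F <->
   forall eps : R, 0 < eps ->
     sup [set r : R | exists T : {linear X -> Y}, exists z : X,
            [/\ F T, Dset T eps z & r = `|T z|]] < 1).
Proof.
move=> _ _ hF; split.
- move=> hB eps eps0.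
  have [eta eta0 heta] := hB eps eps0.
  set E := (X in sup X).
  have [->|/set0P [r0 Er0]] := eqVneq E set0; first by rewrite sup0.
  pose e := Num.min eta (1/2).
  have e0 : 0 < e by rewrite lt_min eta0 /=; lra.
  apply: (@le_lt_trans _ _ (1 - e)); last by lra.
  apply: ge_sup; first by exists r0.
  move=> r [T [z [FT [zS zN] ->]]].
  rewrite leNgt; apply/negP => hz.
  have hz' : 1 - eta < `|T z|.
    apply: le_lt_trans hz; rewrite lerD2l lerN2 ge_min lexx //.
  have [x1 [x1S Tx1 dx]] := heta T z FT zS hz'.
  apply: zN; exists x1.
    by split => //; rewrite Tx1 (hF T FT).2.
  by rewrite -ball_normE /ball_ /=.
- move=> hS eps eps0.
  have := hS eps eps0; set E := (X in sup X) => hE.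
  exists (1 - sup E); first by lra.
  move=> T x0 FT x0S hx0.
  have hD : ~ Dset T eps x0.
    move=> hd.
    have hsE : has_sup E.
      split; first by exists `|T x0|; exists T, x0.
      exists 1 => r [T' [z [FT' [zS _] ->]]].
      exact: opnorm1_le (hF T' FT').2 zS.
    have : `|T x0| <= sup E by apply: sup_upper_bound => //; exists T, x0.
    lra.
  have : (\bigcup_(x in norm_attaining_set T) ball x eps) x0.
    apply: contrapT => hn; apply: hD; split; [exact: x0S | exact: hn].
  move=> [x [xS Tx] bx].
  exists x; split; [exact: xS | by rewrite Tx (hF T FT).2 |].
  by move: bx; rewrite -ball_normE /ball_ /=.
Qed.
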